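(* $\widehat{R}_{3/3,4}=-x^*\approx 3.287278452$, where $x^*$ is the smallest real root of \[ x^9+12x^8+60x^7+120x^6-144x^5-1152x^4-1536x^3+1152x^2+2304x-1536=0. \] (The class $\widehat{\Pi}_{3/3,4}$ consists of exactly three functions $\frac{a_3z^3+a_2z^2+a_1z+1}{(1-az)^3}$, with $a$ ranging over the three real roots of $24a^3-36a^2+12a-1=0$. The value $-x^*$ is attained for $a$ the smallest root, approximately $0.1289$.)
   Context: A real rational function $\psi$ is always considered in lowest terms, as a smooth function on $\mathbb{R}$ minus its finitely many poles. It is absolutely monotonic at $x\in\mathbb{R}$ if $x$ is not a pole and $\psi^{(k)}(x)\ge 0$ for all integers $k\ge 0$. The radius of absolute monotonicity is $R(\psi)=\sup\big(\{r\in[0,\infty): \psi \text{ is absolutely monotonic at each point of } [-r,0]\}\cup\{0\}\big)\in[0,+\infty]$. $\widehat{\Pi}_{s/s,p}$ denotes the set of real rational functions $\psi(z)=P(z)/(1-az)^s$ with $P$ a real polynomial of degree at most $s$ and $a\in\mathbb{R}$, such that $\psi(z)-e^z=O(z^{p+1})$ as $z\to0$. Finally, $\widehat{R}_{s/s,p}=\sup\{R(\psi):\psi\in\widehat{\Pi}_{s/s,p}\}$. *)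

(* Defs.v *)
From Stdlib Require Import Reals Lra.
Open Scope R_scope.

Definition poly_eval (s : nat) (c : nat -> R) (z : R) : R :=
  sum_f_R0 (fun i => c i * z ^ i) s.

Definition rat_expr (s : nat) (c : nat -> R) (a z : R) : R :=
  poly_eval s c z / (1 - a * z) ^ s.

(* psi = P/(1-az)^s is absolutely monotonic at x: x is not a pole, i.e. the
   rational function extends smoothly to a neighbourhood of x (removable
   zeros of the denominator are filled in, as for the lowest-terms form),
   and all derivatives psi^(k)(x), k >= 0, are nonnegative.  The family g
   gives the (necessarily unique) successive derivatives near x. *)
Definition abs_monotonic_at (s : nat) (c : nat -> R) (a x : R) : Prop :=
  exists (delta : R) (g : nat -> R -> R),
    0 < delta /\
    (forall y, Rabs (y - x) < delta -> (1 - a * y) ^ s <> 0 ->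
       g 0%nat y = rat_expr s c a y) /\
    (forall (k : nat) y, Rabs (y - x) < delta ->
       derivable_pt_lim (g k) y (g (S k) y)) /\
    (forall k : nat, 0 <= g k x).

(* The set whose supremum is R(psi):
   {r in [0,oo) : psi abs. monotonic on [-r,0]} union {0}. *)
Definition am_radius_set (s : nat) (c : nat -> R) (a : R) (r : R) : Prop :=
  (0 <= r /\ forall x, -r <= x <= 0 -> abs_monotonic_at s c a x) \/ r = 0.

Definition in_Pi_hat (s p : nat) (c : nat -> R) (a : R) : Prop :=
  exists C delta : R, 0 < delta /\
    forall z, Rabs z < delta -> (1 - a * z) ^ s <> 0 ->
      Rabs (rat_expr s c a z - exp z) <= C * Rabs z ^ (p + 1).

(* \hat R_{s/s,p} = L (a finite value): L is the least upper bound of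
   { R(psi) : psi in \hat\Pi_{s/s,p} }, equivalently of the union of the
   sets am_radius_set over the class (sup of sups = sup of the union). *)
Definition R_hat_eq (s p : nat) (L : R) : Prop :=
  is_lub (fun r => exists (c : nat -> R) (a : R),
                     in_Pi_hat s p c a /\ am_radius_set s c a r) L.

Definition R_psi_eq (s : nat) (c : nat -> R) (a : R) (L : R) : Prop :=
  is_lub (am_radius_set s c a) L.

Definition p9 (x : R) : R :=
  x^9 + 12*x^8 + 60*x^7 + 120*x^6 - 144*x^5 - 1152*x^4 - 1536*x^3
  + 1152*x^2 + 2304*x - 1536.

Definition cubic_a (a : R) : R := 24*a^3 - 36*a^2 + 12*a - 1.

(* Main.v *)
Require Import Defs.
From Stdlib Require Import Reals Lra Lia List.
From Coquelicot Require Import Coquelicot.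
Import ListNotations.
Open Scope R_scope.

Lemma deriv_unique_loc (f1 f2 : R -> R) y e l1 l2 : 0 < e ->
  (forall t, Rabs (t - y) < e -> f1 t = f2 t) ->
  derivable_pt_lim f1 y l1 -> derivable_pt_lim f2 y l2 -> l1 = l2.
Proof.
  intros He Heq H1 H2.
  apply is_derive_Reals in H1. apply is_derive_Reals in H2.
  assert (H3 : is_derive f2 y l1).
  { apply (is_derive_ext_loc f1 f2); auto.
    exists (mkposreal e He). intros t Ht. apply Heq. exact Ht. }
  apply is_derive_unique in H3. apply is_derive_unique in H2. congruence.
Qed.

Lemma mvt_bound (f g : R -> R) (K : R) (n : nat) : 0 <= K -> f 0 = 0 ->
  (forall t, derivable_pt_lim f t (g t)) ->
  (forall s, Rabs s <= 1 -> Rabs (g s) <= K * Rabs s ^ n) ->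
  forall t, Rabs t <= 1 -> Rabs (f t) <= K * Rabs t ^ (S n).
Proof.
  intros HK Hf0 Hd Hg t Ht.
  destruct (Rtotal_order t 0) as [Hlt|[Heq|Hgt]].
  - destruct (MVT_cor2 f g t 0 Hlt (fun c _ => Hd c)) as [c [Hc Hct]].
    rewrite Hf0 in Hc.
    assert (Hc1 : Rabs c <= Rabs t) by (rewrite !Rabs_left; lra).
    assert (Hc2 : Rabs c <= 1) by lra.
    replace (f t) with (- (g c * (0 - t))) by lra.
    rewrite Rabs_Ropp, Rabs_mult. simpl.
    replace (Rabs (0 - t)) with (Rabs t) by (rewrite <- Rabs_Ropp; f_equal; ring).
    specialize (Hg c Hc2).
    assert (Rabs c ^ n <= Rabs t ^ n) by (apply pow_incr; split; [apply Rabs_pos|auto]).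
    assert (0 <= Rabs t) by apply Rabs_pos.
    assert (0 <= Rabs (g c)) by apply Rabs_pos.
    assert (Rabs (g c) <= K * Rabs t ^ n) by (eapply Rle_trans; [exact Hg|]; apply Rmult_le_compat_l; auto).
    nra.
  - subst. rewrite Hf0. simpl. rewrite Rabs_R0. nra.
  - destruct (MVT_cor2 f g 0 t Hgt (fun c _ => Hd c)) as [c [Hc Hct]].
    rewrite Hf0 in Hc.
    assert (Hc1 : Rabs c <= Rabs t) by (rewrite !Rabs_right; lra).
    assert (Hc2 : Rabs c <= 1) by lra.
    replace (f t) with (g c * (t - 0)) by lra.
    rewrite Rabs_mult. simpl.
    replace (t - 0) with t by ring.
    specialize (Hg c Hc2).
    assert (Rabs c ^ n <= Rabs t ^ n) by (apply pow_incr; split; [apply Rabs_pos|auto]).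
    assert (0 <= Rabs t) by apply Rabs_pos.
    assert (0 <= Rabs (g c)) by apply Rabs_pos.
    assert (Rabs (g c) <= K * Rabs t ^ n) by (eapply Rle_trans; [exact Hg|]; apply Rmult_le_compat_l; auto).
    nra.
Qed.

Definition T4 (z : R) := 1 + z + z^2/2 + z^3/6 + z^4/24.

Lemma exp_taylor z : Rabs z <= 1 -> Rabs (exp z - T4 z) <= 3 * Rabs z ^ 5.
Proof.
  assert (H0 : forall s, Rabs s <= 1 -> Rabs (exp s) <= 3 * Rabs s ^ 0).
  { intros s Hs. simpl. rewrite Rabs_right by (left; apply exp_pos).
    assert (exp s <= exp 1) by (pose proof (Rle_abs s); destruct (Req_dec s 1) as [->|E]; [lra|left; apply exp_increasing; lra]).
    pose proof exp_le_3. lra. }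
  assert (H1 := mvt_bound (fun t => exp t - 1) exp 3 0 ltac:(lra) ltac:(cbv beta; rewrite exp_0; ring)
    ltac:(intros t; apply is_derive_Reals; auto_derive; auto; ring) H0).
  assert (H2 := mvt_bound (fun t => exp t - 1 - t) (fun t => exp t - 1) 3 1 ltac:(lra) ltac:(cbv beta; rewrite exp_0; ring)
    ltac:(intros t; apply is_derive_Reals; auto_derive; auto; ring) H1).
  assert (H3 := mvt_bound (fun t => exp t - 1 - t - t^2/2) (fun t => exp t - 1 - t) 3 2 ltac:(lra) ltac:(cbv beta; rewrite exp_0; field)
    ltac:(intros t; apply is_derive_Reals; auto_derive; auto; field) H2).
  assert (H4 := mvt_bound (fun t => exp t - 1 - t - t^2/2 - t^3/6) (fun t => exp t - 1 - t - t^2/2) 3 3 ltac:(lra) ltac:(cbv beta; rewrite exp_0; field)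
    ltac:(intros t; apply is_derive_Reals; auto_derive; auto; field) H3).
  assert (H5 := mvt_bound (fun t => exp t - 1 - t - t^2/2 - t^3/6 - t^4/24) (fun t => exp t - 1 - t - t^2/2 - t^3/6) 3 4 ltac:(lra) ltac:(cbv beta; rewrite exp_0; field)
    ltac:(intros t; apply is_derive_Reals; auto_derive; auto; field) H4).
  intros Hz. specialize (H5 z Hz). unfold T4.
  replace (exp z - (1 + z + z ^ 2 / 2 + z ^ 3 / 6 + z ^ 4 / 24)) with (exp z - 1 - z - z^2/2 - z^3/6 - z^4/24) by ring.
  exact H5.
Qed.

Fixpoint peval (l : list R) (z : R) : R :=
  match l with nil => 0 | q :: l' => q + z * peval l' z end.

Lemma peval_bound l : exists S, 0 <= S /\ forall z, 0 <= z <= 1 -> Rabs (peval l z) <= S.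
Proof.
  induction l as [|q l IH].
  - exists 0. split; [lra|]. intros z _. simpl. rewrite Rabs_R0. lra.
  - destruct IH as [S [HS H]]. exists (Rabs q + S). split.
    { pose proof (Rabs_pos q); lra. }
    intros z Hz. simpl. eapply Rle_trans; [apply Rabs_triang|].
    rewrite Rabs_mult. specialize (H z Hz).
    rewrite (Rabs_right z) by lra.
    assert (0 <= Rabs (peval l z)) by apply Rabs_pos. nra.
Qed.

Lemma coef_zero n q l K d : 0 < d ->
  (forall z, 0 < z < d -> Rabs (peval (q :: l) z) <= K * z ^ (S n)) ->
  q = 0 /\ (forall z, 0 < z < d -> Rabs (peval l z) <= K * z ^ n).
Proof.
  intros Hd H. destruct (peval_bound l) as [S [HS HB]].
  assert (Hq : forall z, 0 < z < Rmin d 1 -> Rabs q <= (Rabs K + S) * z).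
  { intros z Hz. assert (Hz1 : z < d) by (eapply Rlt_le_trans; [apply Hz|apply Rmin_l]).
    assert (Hz2 : z < 1) by (eapply Rlt_le_trans; [apply Hz|apply Rmin_r]).
    specialize (H z (conj (proj1 Hz) Hz1)). simpl in H.
    specialize (HB z ltac:(lra)).
    replace q with ((q + z * peval l z) - z * peval l z) by ring.
    eapply Rle_trans; [apply Rabs_triang|]. rewrite Rabs_Ropp, Rabs_mult, (Rabs_right z) by lra.
    assert (z ^ n <= 1) by (rewrite <- (pow1 n); apply pow_incr; lra).
    assert (0 <= z ^ n) by (apply pow_le; lra).
    assert (K * (z * z^n) <= Rabs K * (z * z^n)) by (apply Rmult_le_compat_r; [apply Rmult_le_pos; lra|apply Rle_abs]).
    assert (Rabs K * (z * z^n) <= Rabs K * z) by (apply Rmult_le_compat_l; [apply Rabs_pos|nra]).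
    assert (0 <= Rabs (peval l z)) by apply Rabs_pos.
    nra. }
  assert (Hq0 : q = 0).
  { destruct (Req_dec q 0) as [E|E]; auto. exfalso.
    assert (Hqp : 0 < Rabs q) by (apply Rabs_pos_lt; auto).
    pose proof (Rabs_pos K).
    set (z := Rmin (Rmin d 1) (Rabs q / (Rabs K + S + 1)) / 2).
    assert (Hm : 0 < Rmin (Rmin d 1) (Rabs q / (Rabs K + S + 1))).
    { apply Rmin_glb_lt. apply Rmin_glb_lt; lra. apply Rdiv_lt_0_compat; lra. }
    assert (Hz : 0 < z < Rmin d 1).
    { unfold z. split. lra. pose proof (Rmin_l (Rmin d 1) (Rabs q / (Rabs K + S + 1))). lra. }
    specialize (Hq z Hz).
    assert (Hzl : z < Rabs q / (Rabs K + S + 1)).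
    { unfold z. pose proof (Rmin_r (Rmin d 1) (Rabs q / (Rabs K + S + 1))). lra. }
    apply Rmult_lt_compat_l with (r := Rabs K + S + 1) in Hzl; [|lra].
    replace ((Rabs K + S + 1) * (Rabs q / (Rabs K + S + 1))) with (Rabs q) in Hzl by (field; lra).
    nra. }
  split; auto. subst q. intros z Hz. specialize (H z Hz). simpl in H.
  rewrite Rplus_0_l, Rabs_mult, (Rabs_right z) in H by lra.
  apply Rmult_le_reg_l with z; [lra|]. nra.
Qed.
Lemma h_deriv a n z : 1 - a*z <> 0 ->
  derivable_pt_lim (fun t => / (1 - a*t)^n) z (INR n * a * / (1-a*z)^(S n)).
Proof.
  intros Hw. apply is_derive_Reals.
  destruct n as [|m].
  - simpl. auto_derive. auto. field. auto.
  - auto_derive. { change ((1 + - (a * z)) ^ S m <> 0). apply pow_nonzero. intro E; apply Hw; lra. }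
    replace (match m with 0%nat => 1 | S _ => INR m + 1 end) with (INR m + 1) by (destruct m; simpl; ring).
    rewrite S_INR. replace (1 + - (a*z)) with (1 - a*z) by ring.
    replace ((1-a*z)^(S (S m))) with ((1-a*z)*((1-a*z)*(1-a*z)^m)) by (simpl; ring).
    assert (Hp: (1 - a*z)^m <> 0) by (apply pow_nonzero; auto).
    simpl pow.
    set (p := (1 - a*z)^m) in *. field. auto.
Qed.

Definition aa (a : R) := -(/6 - 3*a/2 + 3*a^2 - a^3).
Definition bb (a : R) := /2 - 4*a + 6*a^2.
Definition cc (a : R) := -/2 + 7*a/2 - 4*a^2.
Definition dd (a : R) := /6 - a + a^2.

Definition F (a : R) (k : nat) (z : R) : R :=
  (match k with O => aa a / a^3 | S _ => 0 end)
  + bb a / a^3 * a^k * INR (Factorial.fact k) * / (1 - a*z)^(S k)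
  + cc a / a^3 * a^k * INR (Factorial.fact (S k)) * / (1 - a*z)^(S (S k))
  + dd a / a^3 * a^k * (INR (Factorial.fact (S (S k))) / 2) * / (1 - a*z)^(S (S (S k))).

Lemma dplus f g x l1 l2 : derivable_pt_lim f x l1 -> derivable_pt_lim g x l2 ->
  derivable_pt_lim (fun t => f t + g t) x (l1 + l2).
Proof. apply derivable_pt_lim_plus. Qed.
Lemma dscal K f x l : derivable_pt_lim f x l -> derivable_pt_lim (fun t => K * f t) x (K * l).
Proof. intros H. apply (derivable_pt_lim_scal f K x l H). Qed.
Lemma dconst K x : derivable_pt_lim (fun _ => K) x 0.
Proof. apply derivable_pt_lim_const. Qed.
Lemma deq f x l1 l2 : derivable_pt_lim f x l1 -> l1 = l2 -> derivable_pt_lim f x l2.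
Proof. intros H ->; auto. Qed.

Lemma F_deriv a k z : a <> 0 -> 1 - a*z <> 0 -> derivable_pt_lim (F a k) z (F a (S k) z).
Proof.
  intros Ha Hw. unfold F.
  eapply deq.
  { apply dplus. apply dplus. apply dplus. apply dconst.
    apply dscal, h_deriv; auto. apply dscal, h_deriv; auto. apply dscal, h_deriv; auto. }
  change (Factorial.fact (S (S (S k)))) with (S (S (S k)) * Factorial.fact (S (S k)))%nat.
  change (Factorial.fact (S (S k))) with (S (S k) * Factorial.fact (S k))%nat.
  change (Factorial.fact (S k)) with (S k * Factorial.fact k)%nat.
  rewrite !mult_INR, !S_INR.
  assert (Hp: (1 - a*z)^k <> 0) by (apply pow_nonzero; auto).
  simpl pow.
  set (p := (1 - a*z)^k) in *. set (q := a^k) in *. set (f := INR (Factorial.fact k)). field.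
  auto.
Qed.

Definition Pa (a z : R) : R := 1 + (1-3*a)*z + (/2 - 3*a+3*a^2)*z^2 + (/6 - 3*a/2 + 3*a^2 - a^3)*z^3.

Definition cmatch (c : nat -> R) (a : R) : Prop :=
  c 0%nat = 1 /\ c 1%nat = 1 - 3*a /\ c 2%nat = /2 - 3*a + 3*a^2 /\ c 3%nat = /6 - 3*a/2 + 3*a^2 - a^3.

Lemma rat_expr_match c a z : cmatch c a -> rat_expr 3 c a z = Pa a z / (1 - a*z)^3.
Proof.
  intros (H0 & H1 & H2 & H3). unfold rat_expr, poly_eval. simpl.
  rewrite H0, H1, H2, H3. unfold Pa. unfold Rdiv. apply Rmult_eq_compat_r. ring.
Qed.

Lemma F0 a z : a <> 0 -> 1 - a*z <> 0 -> F a 0 z = Pa a z / (1 - a*z)^3.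
Proof.
  intros Ha Hw. unfold F, Pa, aa, bb, cc, dd. simpl. field. auto.
Qed.

Definition Qm (a m u : R) := bb a + cc a * m * u + dd a * m * (m + 1) / 2 * u^2.

Lemma F_form a j z : a <> 0 -> 1 - a*z <> 0 ->
  F a (S j) z = a^(S j) * INR (Factorial.fact (S j)) * (/ (1 - a*z))^(S (S j)) / a^3
                * Qm a (INR (S (S j))) (/ (1 - a*z)).
Proof.
  intros Ha Hw. unfold F, Qm.
  change (Factorial.fact (S (S (S j)))) with (S (S (S j)) * Factorial.fact (S (S j)))%nat.
  change (Factorial.fact (S (S j))) with (S (S j) * Factorial.fact (S j))%nat.
  rewrite !mult_INR, !S_INR.
  rewrite <- !pow_inv.
  assert (Hp: (/ (1 - a*z))^j <> 0) by (apply pow_nonzero; apply Rinv_neq_0_compat; auto).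
  simpl pow.
  set (p := (/ (1 - a*z))^j) in *. set (q := a^j) in *. set (f := INR (Factorial.fact j)). field.
  auto.
Qed.

Lemma am_nonneg s c a x : abs_monotonic_at s c a x -> (1 - a*x)^s <> 0 -> 0 <= rat_expr s c a x.
Proof.
  intros [d [g [Hd [H0 [_ Hk]]]]] Hw.
  rewrite <- H0; auto. rewrite Rminus_diag, Rabs_R0; auto.
Qed.

Lemma am_ident c a x r0 : a <> 0 -> cmatch c a -> 0 < r0 ->
  (forall y, Rabs (y - x) < r0 -> 1 - a*y <> 0) ->
  abs_monotonic_at 3 c a x -> forall k, 0 <= F a k x.
Proof.
  intros Ha Hc Hr0 Hw [d [g [Hd [H0 [Hder Hk]]]]].
  set (e := Rmin d r0).
  assert (He : 0 < e) by (apply Rmin_glb_lt; auto).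
  assert (Hed : e <= d) by apply Rmin_l.
  assert (Her : e <= r0) by apply Rmin_r.
  assert (Hall : forall k y, Rabs (y - x) < e -> g k y = F a k y).
  { induction k as [|k IH]; intros y Hy.
    - rewrite H0 by (try lra; apply pow_nonzero; apply Hw; lra).
      rewrite F0 by (auto; apply Hw; lra). apply rat_expr_match; auto.
    - apply (deriv_unique_loc (g k) (F a k) y (e - Rabs (y - x))).
      + lra.
      + intros t Ht. apply IH.
        replace (t - x) with ((t - y) + (y - x)) by ring.
        eapply Rle_lt_trans; [apply Rabs_triang|]. lra.
      + apply Hder. lra.
      + apply F_deriv; auto. apply Hw. lra. }
  intros k. rewrite <- Hall. apply Hk. rewrite Rminus_diag, Rabs_R0; auto.
Qed.

Lemma am_build c a x : a <> 0 -> cmatch c a ->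
  (forall y, Rabs (y - x) < 1 -> 1 - a*y <> 0) ->
  (forall k, 0 <= F a k x) -> abs_monotonic_at 3 c a x.
Proof.
  intros Ha Hc Hw Hk. exists 1, (F a). split; [lra|]. split.
  - intros y Hy _. rewrite F0 by auto. symmetry. apply rat_expr_match; auto.
  - split; auto. intros k y Hy. apply F_deriv; auto.
Qed.

Lemma pi_extract c a : in_Pi_hat 3 4 c a -> cubic_a a = 0 /\ cmatch c a.
Proof.
  intros [C [d [Hd H]]].
  set (d' := Rmin d (Rmin 1 (/ (2 * (Rabs a + 1))))).
  assert (Ha1 : 0 < Rabs a + 1) by (pose proof (Rabs_pos a); lra).
  assert (Hd' : 0 < d').
  { unfold d'. apply Rmin_glb_lt; auto. apply Rmin_glb_lt; [lra|]. apply Rinv_0_lt_compat. lra. }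
  set (K := 27/8 * (Rabs C + 3)).
  set (l := [c 0%nat - 1; c 1%nat - (1 - 3*a); c 2%nat - (/2 - 3*a + 3*a^2);
             c 3%nat - (/6 - 3*a/2 + 3*a^2 - a^3); -(/24 - a/2 + 3*a^2/2 - a^3);
             -(-a/8 + a^2/2 - a^3/2); -(a^2/8 - a^3/6); a^3/24]).
  assert (HQ : forall z, 0 < z < d' -> Rabs (peval l z) <= K * z ^ 5).
  { intros z Hz.
    assert (Hzd : z < d) by (eapply Rlt_le_trans; [apply Hz|apply Rmin_l]).
    assert (Hz1 : z <= /(2 * (Rabs a + 1))).
    { apply Rlt_le. eapply Rlt_le_trans; [apply Hz|]. unfold d'.
      eapply Rle_trans; [apply Rmin_r|apply Rmin_r]. }
    assert (Hz2 : z <= 1).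
    { apply Rlt_le. eapply Rlt_le_trans; [apply Hz|]. unfold d'.
      eapply Rle_trans; [apply Rmin_r|apply Rmin_l]. }
    assert (Haz : Rabs a * z <= /2).
    { apply Rmult_le_compat_l with (r := 2 * (Rabs a + 1)) in Hz1; [|lra].
      rewrite Rinv_r in Hz1 by lra. pose proof (Rabs_pos a). nra. }
    assert (Hw : /2 <= 1 - a*z <= 3/2).
    { pose proof (Rle_abs a). pose proof (Rle_abs (-a)). rewrite Rabs_Ropp in *. nra. }
    set (w := 1 - a*z) in *.
    assert (Hw3 : 0 < w^3 <= 27/8) by (split; [apply pow_lt; lra|]; simpl; nra).
    assert (Hw3n : w^3 <> 0) by lra.
    assert (Hrz : Rabs z < d) by (rewrite Rabs_right; lra).
    specialize (H z Hrz Hw3n).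
    assert (Hex := exp_taylor z ltac:(rewrite Rabs_right; lra)).
    assert (E : peval l z = w^3 * (rat_expr 3 c a z - exp z) + (exp z - T4 z) * w^3).
    { assert (Hw0 : w <> 0) by lra. unfold l, rat_expr, poly_eval. simpl. unfold w in *. unfold T4. field. auto. }
    rewrite E. eapply Rle_trans; [apply Rabs_triang|]. rewrite !Rabs_mult.
    rewrite (Rabs_right (w^3)) by lra. rewrite (Rabs_right z) in * by lra.
    replace (4 + 1)%nat with 5%nat in H by reflexivity.
    assert (0 <= z^5) by (apply pow_le; lra).
    assert (C <= Rabs C) by apply Rle_abs.
    assert (0 <= Rabs (rat_expr 3 c a z - exp z)) by apply Rabs_pos.
    assert (0 <= Rabs (exp z - T4 z)) by apply Rabs_pos.
    assert (w^3 * Rabs (rat_expr 3 c a z - exp z) <= 27/8 * (Rabs C * z^5)) by nra.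
    assert (Rabs (exp z - T4 z) * w^3 <= 27/8 * (3 * z^5)) by nra.
    unfold K. nra. }
  unfold l in HQ.
  destruct (coef_zero 4 _ _ _ _ Hd' HQ) as [E0 HQ1].
  destruct (coef_zero 3 _ _ _ _ Hd' HQ1) as [E1 HQ2].
  destruct (coef_zero 2 _ _ _ _ Hd' HQ2) as [E2 HQ3].
  destruct (coef_zero 1 _ _ _ _ Hd' HQ3) as [E3 HQ4].
  destruct (coef_zero 0 _ _ _ _ Hd' HQ4) as [E4 _].
  split.
  - unfold cubic_a. lra.
  - unfold cmatch. repeat split; lra.
Qed.

Definition cf (a : R) (i : nat) : R :=
  match i with
  | O => 1 | 1%nat => 1 - 3*a | 2%nat => /2 - 3*a + 3*a^2
  | 3%nat => /6 - 3*a/2 + 3*a^2 - a^3 | _ => 0 end.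

Lemma cf_match a : cmatch (cf a) a.
Proof. unfold cmatch, cf. repeat split; reflexivity. Qed.

Lemma pi_build a : cubic_a a = 0 -> 0 < a < /2 -> in_Pi_hat 3 4 (cf a) a.
Proof.
  intros Hc Ha. exists 6, (/2). split; [lra|].
  intros z Hz Hw3n.
  assert (Hzb : - /2 < z < /2) by (split; [pose proof (Rle_abs (-z)); rewrite Rabs_Ropp in *|pose proof (Rle_abs z)]; lra).
  assert (Hw : 3/4 <= 1 - a*z) by nra.
  set (w := 1 - a*z) in *.
  assert (Hw3 : 27/64 <= w^3) by (simpl; nra).
  rewrite rat_expr_match by apply cf_match.
  set (e5 := -(-a/8 + a^2/2 - a^3/2)). set (e6 := -(a^2/8 - a^3/6)). set (e7 := a^3/24).
  assert (E0 : Pa a z - T4 z * w^3 = z^5*(e5+e6*z+e7*z^2) + cubic_a a / 24 * z^4).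
  { unfold w, Pa, T4, e5, e6, e7, cubic_a. field. }
  rewrite Hc in E0.
  assert (Hw0 : w <> 0) by lra.
  assert (E : Pa a z / w^3 - exp z = z^5 * (e5 + e6*z + e7*z^2) / w^3 - (exp z - T4 z)).
  { replace (z^5*(e5+e6*z+e7*z^2)) with (Pa a z - T4 z * w^3) by lra. field. auto. }
  fold w. rewrite E. eapply Rle_trans; [apply Rabs_triang|]. rewrite Rabs_Ropp.
  assert (Hex := exp_taylor z ltac:(lra)).
  assert (Hb : Rabs (e5 + e6*z + e7*z^2) <= 1).
  { assert (0 <= a^2 <= /4) by (simpl; nra). assert (0 <= a^3 <= /8) by (simpl; nra).
    assert (0 <= z^2 <= /4) by (simpl; nra).
    apply Rabs_le. unfold e5, e6, e7. split; nra. }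
  unfold Rdiv. rewrite !Rabs_mult. rewrite (Rabs_right (/ w^3)) by (left; apply Rinv_0_lt_compat; lra).
  rewrite <- RPow_abs.
  assert (Hi : / w^3 <= 3) by (apply (Rmult_le_reg_l (w^3)); [lra|]; rewrite Rinv_r by lra; lra).
  assert (0 <= Rabs z ^ 5) by (apply pow_le; apply Rabs_pos).
  assert (0 <= Rabs (e5 + e6 * z + e7 * z ^ 2)) by apply Rabs_pos.
  assert (0 < / w^3) by (apply Rinv_0_lt_compat; lra).
  assert (Rabs z ^ 5 * Rabs (e5 + e6 * z + e7 * z ^ 2) <= Rabs z ^ 5) by nra.
  replace (4+1)%nat with 5%nat by reflexivity.
  nra.
Qed.

Definition Pq (a z : R) : R := 1 + (1-3*a)*z + (/2 - 3*a+3*a^2)*z^2 + (/8 - a + 3*a^2/2)*z^3.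

Lemma Pa_red a z : cubic_a a = 0 -> Pa a z = Pq a z.
Proof.
  intros H. assert (E : Pa a z - Pq a z = - cubic_a a / 24 * z^3) by (unfold Pa, Pq, cubic_a; field).
  rewrite H in E. lra.
Qed.

Lemma cubic_cont : continuity cubic_a.
Proof. unfold cubic_a. reg. Qed.

Lemma Pa_cont a : continuity (Pa a).
Proof. unfold Pa. reg. Qed.

Lemma cubic_incr c1 c2 c3 x y : 0 < c3 -> c2^2 < 3*c1*c3 -> x < y ->
  1 + c1*x + c2*x^2 + c3*x^3 < 1 + c1*y + c2*y^2 + c3*y^3.
Proof.
  intros H3 Hd Hxy.
  set (s := x + y).
  assert (E : (1 + c1*y + c2*y^2 + c3*y^3) - (1 + c1*x + c2*x^2 + c3*x^3)
              = (y - x) * (c1 + c2*s + c3*(x^2 + x*y + y^2))) by (unfold s; ring).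
  assert (Hq : x^2 + x*y + y^2 >= 3/4 * s^2) by (unfold s; nra).
  assert (Hp : 0 < c1 + c2*s + 3/4*c3*s^2).
  { assert (12*c3*(c1 + c2*s + 3/4*c3*s^2) = (3*c3*s + 2*c2)^2 + (12*c1*c3 - 4*c2^2)) by field.
    assert (0 <= (3*c3*s + 2*c2)^2) by (apply pow2_ge_0).
    assert (0 < 12*c3*(c1 + c2*s + 3/4*c3*s^2)) by nra.
    nra. }
  assert (0 < c1 + c2*s + c3*(x^2 + x*y + y^2)) by nra.
  nra.
Qed.

Section R1.
Variable a : R.
Hypothesis Hl : 0.128886 <= a.
Hypothesis Hh : a <= 0.128887.
Hypothesis Hc : cubic_a a = 0.

Lemma r1_sq : (0.128886 * 0.128886 <= a^2 <= 0.128887 * 0.128887) /\ 2*0.128886*a - 0.128886*0.128886 <= a^2 /\ a^2 <= (0.128886+0.128887)*a - 0.128886*0.128887.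
Proof. simpl. repeat split; nra. Qed.

Lemma r1_Pneg : Pa a (-3.288) < 0.
Proof. rewrite Pa_red by auto. unfold Pq. pose proof r1_sq. lra. Qed.
Lemma r1_Ppos : 0 < Pa a (-3.287).
Proof. rewrite Pa_red by auto. unfold Pq. pose proof r1_sq. lra. Qed.

Lemma r1_incr x y : x < y -> Pa a x < Pa a y.
Proof.
  intros H. rewrite !Pa_red by auto. unfold Pq. pose proof r1_sq.
  apply cubic_incr; auto; try lra.
  assert (0.1631 <= /2 - 3*a + 3*a^2 <= 0.1632) by lra.
  assert (0.613 <= 1 - 3*a) by lra.
  assert (0.021 <= /8 - a + 3*a^2/2) by lra.
  assert (Hs1 : (/2 - 3*a + 3*a^2)^2 <= 0.1632^2) by (apply pow_incr; lra).
  assert (Hs2 : 3 * 0.613 * 0.021 <= 3*(1 - 3*a)*(/8 - a + 3*a^2/2)) by nra.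
  lra.
Qed.

Lemma r1_Qm m u : 2 <= m -> (m = 2 \/ m = 3 \/ m = 4 \/ m = 5 \/ 6 <= m) -> 0.7 <= u <= 1 -> 0 <= Qm a m u.
Proof.
  intros Hm Hcase Hu. pose proof r1_sq. unfold Qm.
  assert (Hb : 0.08412 <= bb a) by (unfold bb; lra).
  assert (Hcl : -0.115346 <= cc a <= -0.115342) by (unfold cc; lra).
  assert (Hd : 0.0543915 <= dd a) by (unfold dd; lra).
  assert (Hmu : 0 <= m * u) by nra.
  assert (Hu2 : 0 <= u^2) by (apply pow2_ge_0).
  assert (E1 : cc a * m * u >= -0.115346 * m * u) by nra.
  assert (Hmm : 0 <= m * (m + 1) / 2) by nra.
  assert (E2 : dd a * m * (m + 1) / 2 * u^2 >= 0.0543915 * m * (m+1)/2 * u^2).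
  { assert (0 <= (dd a - 0.0543915) * (m * (m + 1) / 2) * u^2).
    { apply Rmult_le_pos; [apply Rmult_le_pos|]; lra. }
    nra. }
  destruct Hcase as [->|[->|[->|[->|H6]]]]; try (simpl in *; nra).
  assert (Hpos : 0 <= cc a + dd a * (m + 1) / 2 * u).
  { assert (7 * 0.7 <= (m + 1) * u) by nra.
    assert (0.0543915 * ((m+1)*u) <= dd a * ((m+1)*u)) by (apply Rmult_le_compat_r; nra).
    nra. }
  assert (E : bb a + cc a * m * u + dd a * m * (m + 1) / 2 * u ^ 2
            = bb a + m * u * (cc a + dd a * (m + 1) / 2 * u)) by (simpl; field).
  rewrite E. assert (0 <= m * u * (cc a + dd a * (m + 1) / 2 * u)) by (apply Rmult_le_pos; auto). lra.
Qed.
End R1.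

Section R2.
Variable a : R.
Hypothesis Hl : 0.302534 <= a.
Hypothesis Hh : a <= 0.302535.
Hypothesis Hc : cubic_a a = 0.

Lemma r2_sq : (0.302534 * 0.302534 <= a^2 <= 0.302535 * 0.302535) /\ 2*0.302534*a - 0.302534*0.302534 <= a^2 /\ a^2 <= (0.302534+0.302535)*a - 0.302534*0.302535.
Proof. simpl. repeat split; nra. Qed.

Lemma r2_Qneg : Qm a 7 1 < 0.
Proof. unfold Qm, bb, cc, dd. pose proof r2_sq. simpl in *. lra. Qed.

Lemma r2_Ppos y : y <= -3 -> 0 < Pa a y.
Proof.
  intros Hy. rewrite Pa_red by auto. unfold Pq. pose proof r2_sq.
  set (t := - y). assert (Ht : 3 <= t) by (unfold t; lra).
  replace y with (-t) by (unfold t; ring).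
  assert (Hc1 : 1 - 3*a <= 0.0924) by lra.
  assert (Hc2 : -0.133023 <= /2 - 3*a + 3*a^2) by lra.
  assert (Hc3 : /8 - a + 3*a^2/2 <= -0.040243) by lra.
  assert (0 <= t^2) by apply pow2_ge_0. assert (0 <= t^3) by (apply pow_le; lra).
  assert ((1 - 3*a) * t <= 0.0924 * t) by (apply Rmult_le_compat_r; lra).
  assert (-0.133023 * t^2 <= (/2 - 3*a + 3*a^2) * t^2) by (apply Rmult_le_compat_r; lra).
  assert ((/8 - a + 3*a^2/2) * t^3 <= -0.040243 * t^3) by (apply Rmult_le_compat_r; lra).
  assert (0 < 1 - 0.0924*t - 0.133023*t^2 + 0.040243*t^3).
  { set (s := t - 3). replace t with (s + 3) by (unfold s; ring). assert (0 <= s) by (unfold s; lra).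
    simpl. nra. }
  replace (1 + (1 - 3 * a) * - t + (/ 2 - 3 * a + 3 * a ^ 2) * (- t) ^ 2 + (/ 8 - a + 3 * a ^ 2 / 2) * (- t) ^ 3)
    with (1 - (1 - 3*a)*t + (/ 2 - 3 * a + 3 * a ^ 2) * t^2 - (/ 8 - a + 3 * a ^ 2 / 2) * t^3) by ring.
  lra.
Qed.
End R2.

Section R3.
Variable a : R.
Hypothesis Hl : 1.068579 <= a.
Hypothesis Hh : a <= 1.06858.
Hypothesis Hc : cubic_a a = 0.

Lemma r3_sq : (1.068579 * 1.068579 <= a^2 <= 1.06858 * 1.06858) /\ 2*1.068579*a - 1.068579*1.068579 <= a^2 /\ a^2 <= (1.068579+1.06858)*a - 1.068579*1.06858.
Proof. simpl. repeat split; nra. Qed.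

Lemma r3_Pneg3 : Pa a (-3) < 0.
Proof. rewrite Pa_red by auto. unfold Pq. pose proof r3_sq. lra. Qed.

Lemma r3_Pneg y : y <= -3 -> Pa a y < 0.
Proof.
  intros Hy. rewrite Pa_red by auto. unfold Pq. pose proof r3_sq.
  set (t := - y). assert (Ht : 3 <= t) by (unfold t; lra).
  replace y with (-t) by (unfold t; ring).
  assert (Hc1 : -2.20574 <= 1 - 3*a) by lra.
  assert (Hc2 : /2 - 3*a + 3*a^2 <= 0.71985) by lra.
  assert (Hc3 : 0.769212 <= /8 - a + 3*a^2/2) by lra.
  assert (0 <= t^2) by apply pow2_ge_0. assert (0 <= t^3) by (apply pow_le; lra).
  assert (-2.20574 * t <= (1 - 3*a) * t) by (apply Rmult_le_compat_r; lra).
  assert ((/2 - 3*a + 3*a^2) * t^2 <= 0.71985 * t^2) by (apply Rmult_le_compat_r; lra).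
  assert (0.769212 * t^3 <= (/8 - a + 3*a^2/2) * t^3) by (apply Rmult_le_compat_r; lra).
  assert (1 + 2.20574*t + 0.71985*t^2 - 0.769212*t^3 < 0).
  { set (s := t - 3). replace t with (s + 3) by (unfold s; ring). assert (0 <= s) by (unfold s; lra).
    simpl. nra. }
  replace (1 + (1 - 3 * a) * - t + (/ 2 - 3 * a + 3 * a ^ 2) * (- t) ^ 2 + (/ 8 - a + 3 * a ^ 2 / 2) * (- t) ^ 3)
    with (1 - (1 - 3*a)*t + (/ 2 - 3 * a + 3 * a ^ 2) * t^2 - (/ 8 - a + 3 * a ^ 2 / 2) * t^3) by ring.
  lra.
Qed.
End R3.

Definition Phi (E1 E2 E3 y : R) : R := (-1)*E1^0*E2^0*E3^3*y^9 + (3)*E1^0*E2^1*E3^2*y^9 + (3)*E1^0*E2^1*E3^2*y^8 + (-3/2)*E1^0*E2^2*E3^1*y^9 + (-3)*E1^0*E2^2*E3^1*y^8 + (-3)*E1^0*E2^2*E3^1*y^7 + (1/6)*E1^0*E2^3*E3^0*y^9 + (1/2)*E1^0*E2^3*E3^0*y^8 + (1)*E1^0*E2^3*E3^0*y^7 + (1)*E1^0*E2^3*E3^0*y^6 + (-6)*E1^1*E2^0*E3^2*y^9 + (-12)*E1^1*E2^0*E3^2*y^8 + (-3)*E1^1*E2^0*E3^2*y^7 + (4)*E1^1*E2^1*E3^1*y^9 + (12)*E1^1*E2^1*E3^1*y^8 + (15)*E1^1*E2^1*E3^1*y^7 + (6)*E1^1*E2^1*E3^1*y^6 + (-1/2)*E1^1*E2^2*E3^0*y^9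 + (-2)*E1^1*E2^2*E3^0*y^8 + (-9/2)*E1^1*E2^2*E3^0*y^7 + (-6)*E1^1*E2^2*E3^0*y^6 + (-3)*E1^1*E2^2*E3^0*y^5 + (-5/4)*E1^2*E2^0*E3^1*y^9 + (-5)*E1^2*E2^0*E3^1*y^8 + (-9)*E1^2*E2^0*E3^1*y^7 + (-6)*E1^2*E2^0*E3^1*y^6 + (-3)*E1^2*E2^0*E3^1*y^5 + (1/4)*E1^2*E2^1*E3^0*y^9 + (5/4)*E1^2*E2^1*E3^0*y^8 + (7/2)*E1^2*E2^1*E3^0*y^7 + (6)*E1^2*E2^1*E3^0*y^6 + (6)*E1^2*E2^1*E3^0*y^5 + (3)*E1^2*E2^1*E3^0*y^4 + (-1/36)*E1^3*E2^0*E3^0*y^9 + (-1/6)*E1^3*E2^0*E3^0*y^8 + (-7/12)*E1^3*E2^0*E3^0*y^7 + (-4/3)*E1^3*E2^0*E3^0*y^6 + (-2)*E1^3*E2^0*E3^0*y^5 + (-2)*E1^3*E2^0*E3^0*y^4 + (-1)*E1^3*E2^0*E3^0*y^3 + (14)*E1^0*E2^0*E3^2*y^9 + (42)*E1^0*E2^0*E3^2*y^8 + (30)*E1^0*E2^0*E3^2*y^7 + (3)*E1^0*E2^0*E3^2*y^6 + (-17/2)*E1^0*E2^1*E3^1*y^9 + (-34)*E1^0*E2^1*E3^1*y^8 + (-54)*E1^0*E2^1*E3^1*y^7 + (-39)*E1^0*E2^1*E3^1*y^6 + (-6)*E1^0*E2^1*E3^1*y^5 + (1)*E1^0*E2^2*E3^0*y^9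 + (5)*E1^0*E2^2*E3^0*y^8 + (25/2)*E1^0*E2^2*E3^0*y^7 + (39/2)*E1^0*E2^2*E3^0*y^6 + (15)*E1^0*E2^2*E3^0*y^5 + (3)*E1^0*E2^2*E3^0*y^4 + (7/2)*E1^1*E2^0*E3^1*y^9 + (35/2)*E1^1*E2^0*E3^1*y^8 + (77/2)*E1^1*E2^0*E3^1*y^7 + (39)*E1^1*E2^0*E3^1*y^6 + (21)*E1^1*E2^0*E3^1*y^5 + (6)*E1^1*E2^0*E3^1*y^4 + (-2/3)*E1^1*E2^1*E3^0*y^9 + (-4)*E1^1*E2^1*E3^0*y^8 + (-25/2)*E1^1*E2^1*E3^0*y^7 + (-49/2)*E1^1*E2^1*E3^0*y^6 + (-30)*E1^1*E2^1*E3^0*y^5 + (-21)*E1^1*E2^1*E3^0*y^4 + (-6)*E1^1*E2^1*E3^0*y^3 + (1/12)*E1^2*E2^0*E3^0*y^9 + (7/12)*E1^2*E2^0*E3^0*y^8 + (9/4)*E1^2*E2^0*E3^0*y^7 + (23/4)*E1^2*E2^0*E3^0*y^6 + (10)*E1^2*E2^0*E3^0*y^5 + (12)*E1^2*E2^0*E3^0*y^4 + (9)*E1^2*E2^0*E3^0*y^3 + (3)*E1^2*E2^0*E3^0*y^2 + (-29/24)*E1^0*E2^0*E3^1*y^9 + (-29/4)*E1^0*E2^0*E3^1*y^8 + (-79/4)*E1^0*E2^0*E3^1*y^7 + (-53/2)*E1^0*E2^0*E3^1*y^6 + (-39/2)*E1^0*E2^0*E3^1*y^5 + (-6)*E1^0*E2^0*E3^1*y^4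 + (-3)*E1^0*E2^0*E3^1*y^3 + (5/24)*E1^0*E2^1*E3^0*y^9 + (35/24)*E1^0*E2^1*E3^0*y^8 + (21/4)*E1^0*E2^1*E3^0*y^7 + (47/4)*E1^0*E2^1*E3^0*y^6 + (35/2)*E1^0*E2^1*E3^0*y^5 + (33/2)*E1^0*E2^1*E3^0*y^4 + (9)*E1^0*E2^1*E3^0*y^3 + (3)*E1^0*E2^1*E3^0*y^2 + (-1/24)*E1^1*E2^0*E3^0*y^9 + (-1/3)*E1^1*E2^0*E3^0*y^8 + (-35/24)*E1^1*E2^0*E3^0*y^7 + (-17/4)*E1^1*E2^0*E3^0*y^6 + (-35/4)*E1^1*E2^0*E3^0*y^5 + (-13)*E1^1*E2^0*E3^0*y^4 + (-27/2)*E1^1*E2^0*E3^0*y^3 + (-9)*E1^1*E2^0*E3^0*y^2 + (-3)*E1^1*E2^0*E3^0*y^1 + (1/216)*E1^0*E2^0*E3^0*y^9 + (1/24)*E1^0*E2^0*E3^0*y^8 + (5/24)*E1^0*E2^0*E3^0*y^7 + (17/24)*E1^0*E2^0*E3^0*y^6 + (7/4)*E1^0*E2^0*E3^0*y^5 + (13/4)*E1^0*E2^0*E3^0*y^4 + (9/2)*E1^0*E2^0*E3^0*y^3 + (9/2)*E1^0*E2^0*E3^0*y^2 + (3)*E1^0*E2^0*E3^0*y^1 + (1)*E1^0*E2^0*E3^0*y^0.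

Lemma prod_sym a1 a2 a3 y : Pa a1 y * Pa a2 y * Pa a3 y = Phi (a1+a2+a3) (a1*a2+a1*a3+a2*a3) (a1*a2*a3) y.
Proof. unfold Pa, Phi. field. Qed.

Lemma p9_fact a1 a2 a3 y : a1 + a2 + a3 = 3/2 -> a1*a2+a1*a3+a2*a3 = /2 -> a1*a2*a3 = /24 ->
  p9 y = -1536 * (Pa a1 y * Pa a2 y * Pa a3 y).
Proof. intros H1 H2 H3. rewrite prod_sym, H1, H2, H3. unfold Phi, p9. field. Qed.

Lemma vieta a1 a2 a3 : cubic_a a1 = 0 -> cubic_a a2 = 0 -> cubic_a a3 = 0 ->
  a1 <> a2 -> a1 <> a3 -> a2 <> a3 ->
  a1 + a2 + a3 = 3/2 /\ a1*a2+a1*a3+a2*a3 = /2 /\ a1*a2*a3 = /24.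
Proof.
  intros H1 H2 H3 D12 D13 D23.
  set (al := 24*(a1+a2+a3) - 36). set (be := 12 - 24*(a1*a2+a1*a3+a2*a3)). set (ga := 24*(a1*a2*a3) - 1).
  assert (Hf : forall b, cubic_a b - 24*(b-a1)*(b-a2)*(b-a3) = al*b^2 + be*b + ga)
    by (intros b; unfold cubic_a, al, be, ga; ring).
  assert (F1 := Hf a1). assert (F2 := Hf a2). assert (F3 := Hf a3).
  rewrite H1 in F1. rewrite H2 in F2. rewrite H3 in F3.
  assert (G1 : al*a1^2 + be*a1 + ga = 0) by (rewrite <- F1; ring).
  assert (G2 : al*a2^2 + be*a2 + ga = 0) by (rewrite <- F2; ring).
  assert (G3 : al*a3^2 + be*a3 + ga = 0) by (rewrite <- F3; ring).
  assert (K12 : al*(a1+a2) + be = 0).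
  { assert ((a1 - a2) * (al*(a1+a2) + be) = 0) by (rewrite <- (Rminus_diag_eq _ _ (eq_trans G1 (eq_sym G2))); ring).
    destruct (Rmult_integral _ _ H) as [E|E]; auto. exfalso; apply D12; lra. }
  assert (K13 : al*(a1+a3) + be = 0).
  { assert ((a1 - a3) * (al*(a1+a3) + be) = 0) by (rewrite <- (Rminus_diag_eq _ _ (eq_trans G1 (eq_sym G3))); ring).
    destruct (Rmult_integral _ _ H) as [E|E]; auto. exfalso; apply D13; lra. }
  assert (Hal : al = 0).
  { assert (al * (a2 - a3) = 0) by (rewrite <- (Rminus_diag_eq _ _ (eq_trans K12 (eq_sym K13))); ring).
    destruct (Rmult_integral _ _ H) as [E|E]; auto. exfalso; apply D23; lra. }
  rewrite Hal in K12. assert (Hbe : be = 0) by lra.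
  rewrite Hal, Hbe in G1. assert (Hga : ga = 0) by lra.
  unfold al, be, ga in *. repeat split; lra.
Qed.

Lemma cubic_factor a1 a2 a3 b : a1 + a2 + a3 = 3/2 -> a1*a2+a1*a3+a2*a3 = /2 -> a1*a2*a3 = /24 ->
  cubic_a b = 24*(b-a1)*(b-a2)*(b-a3).
Proof.
  intros H1 H2 H3.
  replace (24*(b-a1)*(b-a2)*(b-a3)) with (24*(b^3 - (a1+a2+a3)*b^2 + (a1*a2+a1*a3+a2*a3)*b - a1*a2*a3)) by ring.
  rewrite H1, H2, H3. unfold cubic_a. field.
Qed.

Lemma neg_cubic_cont : continuity (fun a => - cubic_a a).
Proof. unfold cubic_a. reg. Qed.

Theorem mainTheorem17 :
  exists xs : R,
    p9 xs = 0 /\ (forall y : R, p9 y = 0 -> xs <= y) /\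
    R_hat_eq 3 4 (- xs) /\
    (exists (a : R) (c : nat -> R),
       cubic_a a = 0 /\ (forall b : R, cubic_a b = 0 -> a <= b) /\
       c 0%nat = 1 /\ in_Pi_hat 3 4 c a /\ R_psi_eq 3 c a (- xs)).
Proof.
  destruct (IVT cubic_a 0.128886 0.128887 cubic_cont ltac:(lra) ltac:(unfold cubic_a; lra) ltac:(unfold cubic_a; lra))
    as [a1 [Ha1 Hc1]].
  destruct (IVT (fun a => - cubic_a a) 0.302534 0.302535 neg_cubic_cont ltac:(lra) ltac:(unfold cubic_a; lra) ltac:(unfold cubic_a; lra))
    as [a2 [Ha2 Hc2]].
  assert (Hc2' : cubic_a a2 = 0) by lra. clear Hc2.
  destruct (IVT cubic_a 1.068579 1.06858 cubic_cont ltac:(lra) ltac:(unfold cubic_a; lra) ltac:(unfold cubic_a; lra))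
    as [a3 [Ha3 Hc3]].
  destruct (vieta a1 a2 a3 Hc1 Hc2' Hc3 ltac:(lra) ltac:(lra) ltac:(lra)) as [V1 [V2 V3]].
  assert (Hroots : forall b, cubic_a b = 0 -> b = a1 \/ b = a2 \/ b = a3).
  { intros b Hb. rewrite (cubic_factor a1 a2 a3 b V1 V2 V3) in Hb.
    destruct (Rmult_integral _ _ Hb) as [E|E].
    - destruct (Rmult_integral _ _ E) as [E'|E'].
      + destruct (Rmult_integral _ _ E') as [E''|E'']. lra. left; lra.
      + right; left; lra.
    - right; right; lra. }
  destruct (IVT (Pa a1) (-3.288) (-3.287) (Pa_cont a1) ltac:(lra)
              (r1_Pneg a1 ltac:(lra) ltac:(lra) Hc1) (r1_Ppos a1 ltac:(lra) ltac:(lra) Hc1))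
    as [xs [Hxs Pxs]].
  assert (Hinc : forall x y, x < y -> Pa a1 x < Pa a1 y) by (intros; apply (r1_incr a1); auto; lra).
  assert (HU : forall c a r, in_Pi_hat 3 4 c a -> am_radius_set 3 c a r -> r <= -xs).
  { intros c a r Hpi Hr. destruct (pi_extract c a Hpi) as [Hc Hm].
    destruct Hr as [[Hr0 Hx] | -> ]; [|lra].
    destruct (Rle_or_lt r (-xs)) as [Hle|Hlt]; auto. exfalso.
    destruct (Hroots a Hc) as [ -> | [ -> | -> ]].
    - assert (Ham := Hx (-r) ltac:(lra)).
      assert (Hw : 0 < 1 - a1 * (-r)) by nra.
      assert (Hn := am_nonneg 3 c a1 (-r) Ham ltac:(apply pow_nonzero; lra)).
      rewrite rat_expr_match in Hn by auto.
      assert (HP : Pa a1 (-r) < 0) by (rewrite <- Pxs; apply Hinc; lra).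
      assert (0 < (1 - a1 * (-r))^3) by (apply pow_lt; lra).
      assert (Pa a1 (-r) / (1 - a1 * (-r))^3 < 0).
      { unfold Rdiv. apply Rmult_neg_pos; auto. apply Rinv_0_lt_compat; auto. }
      lra.
    - assert (Ham := Hx 0 ltac:(lra)).
      assert (Hk := am_ident c a2 0 1 ltac:(lra) Hm ltac:(lra)
                      ltac:(intros y Hy; rewrite Rminus_0_r in Hy; pose proof (Rle_abs y); nra) Ham 6).
      rewrite F_form in Hk by lra.
      replace (1 - a2 * 0) with 1 in Hk by ring. rewrite Rinv_1, pow1 in Hk.
      replace (INR 7) with 7 in Hk by (simpl; ring).
      assert (HQ := r2_Qneg a2 ltac:(lra) ltac:(lra)).
      assert (0 < a2 ^ 6 * INR (Factorial.fact 6) * 1 / a2^3).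
      { unfold Rdiv. apply Rmult_lt_0_compat. apply Rmult_lt_0_compat. apply Rmult_lt_0_compat.
        apply pow_lt; lra. apply lt_0_INR, Factorial.lt_O_fact. lra. apply Rinv_0_lt_compat, pow_lt; lra. }
      nra.
    - assert (Ham := Hx (-3) ltac:(lra)).
      assert (Hw : 0 < 1 - a3 * (-3)) by nra.
      assert (Hn := am_nonneg 3 c a3 (-3) Ham ltac:(apply pow_nonzero; lra)).
      rewrite rat_expr_match in Hn by auto.
      assert (HP := r3_Pneg3 a3 ltac:(lra) ltac:(lra) Hc3).
      assert (0 < (1 - a3 * (-3))^3) by (apply pow_lt; lra).
      assert (Pa a3 (-3) / (1 - a3 * (-3))^3 < 0).
      { unfold Rdiv. apply Rmult_neg_pos; auto. apply Rinv_0_lt_compat; auto. }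
      lra. }
  assert (HL : am_radius_set 3 (cf a1) a1 (-xs)).
  { left. split; [lra|]. intros x Hx.
    apply am_build; [lra| apply cf_match | |].
    - intros y Hy. pose proof (Rle_abs (y - x)). nra.
    - assert (Hw : 1 <= 1 - a1 * x <= 1.424) by nra.
      intros [|j].
      + rewrite F0 by lra.
        assert (0 <= Pa a1 x).
        { destruct (Req_dec x xs) as [ -> | E]; [lra|]. rewrite <- Pxs. left; apply Hinc; lra. }
        unfold Rdiv. apply Rmult_le_pos; auto. left; apply Rinv_0_lt_compat, pow_lt; lra.
      + rewrite F_form by lra.
        assert (Hu : 0.7 <= / (1 - a1 * x) <= 1).
        { split.
          - apply (Rmult_le_reg_l (1 - a1 * x)); [lra|]. rewrite Rinv_r by lra. lra.
          - apply (Rmult_le_reg_l (1 - a1 * x)); [lra|]. rewrite Rinv_r by lra. lra. }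
        assert (HQ : 0 <= Qm a1 (INR (S (S j))) (/ (1 - a1 * x))).
        { apply (r1_Qm a1); try lra.
          - rewrite !S_INR. pose proof (pos_INR j). lra.
          - destruct j as [|[|[|[|j]]]]; simpl; try lra.
            right; right; right; right. change (6 <= INR (S (S (S (S (S (S j))))))). rewrite !S_INR. pose proof (pos_INR j). lra. }
        apply Rmult_le_pos; auto.
        unfold Rdiv. apply Rmult_le_pos; [|left; apply Rinv_0_lt_compat, pow_lt; lra].
        apply Rmult_le_pos; [apply Rmult_le_pos|].
        * left; apply pow_lt; lra.
        * apply pos_INR.
        * left; apply pow_lt; lra. }
  exists xs. split; [|split; [|split]].
  - rewrite (p9_fact a1 a2 a3 xs V1 V2 V3), Pxs. ring.
  - intros y Hy. destruct (Rle_or_lt xs y) as [Hle|Hlt]; auto. exfalso.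
    rewrite (p9_fact a1 a2 a3 y V1 V2 V3) in Hy.
    assert (P1 : Pa a1 y < 0) by (rewrite <- Pxs; apply Hinc; auto).
    assert (P2 := r2_Ppos a2 ltac:(lra) ltac:(lra) Hc2' y ltac:(lra)).
    assert (P3 := r3_Pneg a3 ltac:(lra) ltac:(lra) Hc3 y ltac:(lra)).
    assert (0 < Pa a1 y * Pa a2 y * Pa a3 y).
    { replace (Pa a1 y * Pa a2 y * Pa a3 y) with ((- Pa a1 y) * Pa a2 y * (- Pa a3 y)) by ring.
      apply Rmult_lt_0_compat; [apply Rmult_lt_0_compat|]; lra. }
    lra.
  - split.
    + intros r [c [a [Hpi Hr]]]. eapply HU; eauto.
    + intros M HM. apply HM. exists (cf a1), a1. split; auto. apply pi_build; auto. lra.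
  - exists a1, (cf a1). split; [auto|]. split.
    { intros b Hb. destruct (Hroots b Hb) as [ -> | [ -> | -> ]]; lra. }
    split; [reflexivity|]. split; [apply pi_build; auto; lra|].
    split.
    + intros r Hr. eapply HU; eauto. apply pi_build; auto; lra.
    + intros M HM. apply HM. exact HL.
Qed.
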